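(* Let $S$ be a set, let $\mathcal{T}\subseteq \mathcal{P}(S)$ be a nonempty family containing a countable subfamily that separates points of $S$, and let $\mathcal{H}\subseteq\mathcal{P}(S)$ be a semiring. Then $\mathcal{C}(\mathcal{T})\subseteq\mathcal{C}(\mathcal{H})$ if and only if every element of $\mathcal{T}$ is a countable union of sets from $\mathcal{H}$.
   Context: $C(S)$ is the set of countable subsets of $S$; $N_A(M)=|A\cap M|$ for $A\subseteq S$, $M\in C(S)$; for nonempty $\mathcal{T}\subseteq\mathcal{P}(S)$, $\mathcal{C}(\mathcal{T})=\sigma(N_A\mid A\in\mathcal{T})$ (a $\sigma$-field on $C(S)$). A family $\mathcal{E}$ separates points of $S$ if for any distinct $x,y\in S$ there is $A\in\mathcal{E}$ with $1_A(x)\ne1_A(y)$. *)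

(* Defs.v *)
From Stdlib Require Import List.
Import ListNotations.

Definition set (X : Type) := X -> Prop.

Definition countable {S : Type} (M : set S) : Prop :=
  exists f : S -> nat, forall x y, M x -> M y -> f x = f y -> x = y.

Definition CS (S : Type) := { M : set S | countable M }.

(* Cardinality in the extended naturals N ∪ {∞}: Some n = n, None = ∞. *)
Definition has_card {S : Type} (P : set S) (k : option nat) : Prop :=
  match k with
  | Some n => exists l : list S, NoDup l /\ length l = n /\ (forall x, P x <-> In x l)
  | None => ~ exists l : list S, forall x, P x <-> In x l
  end.

Definition N_eq {S : Type} (A : set S) (M : CS S) (k : option nat) : Prop :=
  has_card (fun x => A x /\ proj1_sig M x) k.

Definition is_sigma_algebra {X : Type} (F : set (set X)) : Prop :=
  F (fun _ => True) /\
  (forall Y, F Y -> F (fun x => ~ Y x)) /\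
  (forall Y : nat -> set X, (forall n, F (Y n)) -> F (fun x => exists n, Y n x)).

Definition sigma_gen {X : Type} (G : set (set X)) : set (set X) :=
  fun Y => forall F, is_sigma_algebra F -> (forall Z, G Z -> F Z) -> F Y.

(* C(T) = σ(N_A | A ∈ T): generated by the level sets {M | N_A(M) = k},
   k ∈ N ∪ {∞} (N ∪ {∞} carrying its discrete σ-field). *)
Definition calC {S : Type} (T : set (set S)) : set (set (CS S)) :=
  sigma_gen (fun Y => exists A k, T A /\ Y = (fun M => N_eq A M k)).

Definition separates {S : Type} (E : nat -> set S) : Prop :=
  forall x y : S, x <> y -> exists n, ~ (E n x <-> E n y).

Definition semiring {S : Type} (H : set (set S)) : Prop :=
  H (fun _ => False) /\
  (forall A B, H A -> H B -> H (fun x => A x /\ B x)) /\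
  (forall A B, H A -> H B ->
     exists (n : nat) (C : nat -> set S),
       (forall i, i < n -> H (C i)) /\
       (forall i j x, i < n -> j < n -> i <> j -> C i x -> C j x -> False) /\
       (forall x, (A x /\ ~ B x) <-> exists i, i < n /\ C i x)).

Definition countable_union_of {S : Type} (H : set (set S)) (A : set S) : Prop :=
  exists B : nat -> set S, (forall n, H (B n)) /\ (forall x, A x <-> exists n, B n x).

(* Main.v *)
Require Import Defs.
From Stdlib Require Import List Arith Lia Cantor Classical ClassicalEpsilon FunctionalExtensionality PropExtensionality.
Import ListNotations.

Lemma set_ext {X} (P Q : set X) : (forall z, P z <-> Q z) -> P = Q.
Proof. intros h; apply functional_extensionality; intros z; apply propositional_extensionality; auto. Qed.

Lemma sigma_gen_sa {X} (G : set (set X)) : is_sigma_algebra (sigma_gen G).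
Proof.
  split; [|split].
  - intros F hF _; exact (proj1 hF).
  - intros Y hY F hF hG; apply (proj1 (proj2 hF)); apply hY; auto.
  - intros Y hY F hF hG; apply (proj2 (proj2 hF)); intros n; apply hY; auto.
Qed.

Lemma sigma_gen_incl {X} (G : set (set X)) Z : G Z -> sigma_gen G Z.
Proof. intros h F _ hG; auto. Qed.

Section SA.
Context {X : Type} (F : set (set X)) (hF : is_sigma_algebra F).

Lemma sa_ext A B : F A -> (forall x, A x <-> B x) -> F B.
Proof. intros h e; rewrite <- (set_ext _ _ e); exact h. Qed.

Lemma sa_T : F (fun _ => True).
Proof. exact (proj1 hF). Qed.

Lemma sa_C A : F A -> F (fun x => ~ A x).
Proof. apply (proj1 (proj2 hF)). Qed.

Lemma sa_U (Y : nat -> set X) : (forall n, F (Y n)) -> F (fun x => exists n, Y n x).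
Proof. apply (proj2 (proj2 hF)). Qed.

Lemma sa_empty : F (fun _ => False).
Proof. apply (sa_ext _ _ (sa_C _ sa_T)). tauto. Qed.

Lemma sa_I (Y : nat -> set X) : (forall n, F (Y n)) -> F (fun x => forall n, Y n x).
Proof.
  intros h. apply (sa_ext _ _ (sa_C _ (sa_U (fun n x => ~ Y n x) (fun n => sa_C _ (h n))))).
  intros x; split.
  - intros hn n. apply NNPP; intros c; apply hn; exists n; auto.
  - intros hn [n c]; auto.
Qed.

Lemma sa_or A B : F A -> F B -> F (fun x => A x \/ B x).
Proof.
  intros ha hb.
  apply (sa_ext _ _ (sa_U (fun n => match n with 0 => A | _ => B end) (fun n => match n with 0 => ha | _ => hb end))).
  intros x; split.
  - intros [[|n] h]; auto.
  - intros [h|h]; [exists 0|exists 1]; auto.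
Qed.

Lemma sa_and A B : F A -> F B -> F (fun x => A x /\ B x).
Proof.
  intros ha hb. apply (sa_ext _ _ (sa_C _ (sa_or _ _ (sa_C _ ha) (sa_C _ hb)))).
  intros x; split; [intros h; apply NNPP; tauto | tauto].
Qed.

Lemma sa_cond (P : Prop) A : (P -> F A) -> F (fun x => P /\ A x).
Proof.
  intros h. destruct (classic P) as [p|p].
  - apply (sa_ext _ _ (h p)); tauto.
  - apply (sa_ext _ _ sa_empty); tauto.
Qed.
End SA.

Definition cge {X} (n : nat) (P : set X) :=
  exists l, NoDup l /\ length l = n /\ forall x, In x l -> P x.

Lemma ge_S {X} n (P : set X) : cge (S n) P -> cge n P.
Proof.
  intros [[|a l] [h1 [h2 h3]]]; [discriminate|].
  exists l; inversion h1; subst; simpl in *; repeat split; auto.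
Qed.

Lemma ge_le {X} n m (P : set X) : cge n P -> m <= n -> cge m P.
Proof.
  intros h hle; induction hle; auto. apply IHhle, ge_S, h.
Qed.

Lemma ge_mono {X} n (P Q : set X) : (forall z, P z -> Q z) -> cge n P -> cge n Q.
Proof. intros hpq [l [a [b c]]]; exists l; repeat split; auto. Qed.

Lemma card_ge {X} (P : set X) m : has_card P (Some m) -> cge m P.
Proof. intros [l [a [b c]]]; exists l; repeat split; auto; intros x; apply c. Qed.

Lemma card_le {X} (P : set X) m n : has_card P (Some m) -> cge n P -> n <= m.
Proof.
  intros [l [a [b c]]] [l' [a' [b' c']]]. subst.
  apply (NoDup_incl_length a'). intros x hx; apply c, c', hx.
Qed.

Lemma ge0 {X} (P : set X) : cge 0 P.
Proof. exists []; split; [constructor|split; [reflexivity|intros x []]]. Qed.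

Lemma card_inf {X} (P : set X) : has_card P None <-> forall n, cge n P.
Proof.
  split.
  - intros h n; induction n.
    + apply ge0.
    + destruct IHn as [l [a [b c]]].
      assert (exists x, P x /\ ~ In x l) as [x [px nx]].
      { apply NNPP; intros hn; apply h; exists l; intros x; split; auto.
        intros px; apply NNPP; intros nx; apply hn; exists x; auto. }
      exists (x :: l); repeat split; simpl; try lia.
      * constructor; auto.
      * intros y [e|e]; subst; auto.
  - intros h [l hl]. destruct (h (S (length l))) as [l' [a [b c]]].
    assert (length l' <= length l) by (apply (NoDup_incl_length a); intros x hx; apply hl, c, hx).
    lia.
Qed.

Lemma card_fin {X} (P : set X) m : cge m P -> ~ cge (S m) P -> has_card P (Some m).
Proof.
  intros [l [a [b c]]] hn. exists l; repeat split; auto.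
  intros px. apply NNPP; intros nx; apply hn.
  exists (x :: l); repeat split; simpl; try lia.
  - constructor; auto.
  - intros y [e|e]; subst; auto.
Qed.

Lemma card_some_iff {X} (P : set X) m : has_card P (Some m) <-> cge m P /\ ~ cge (S m) P.
Proof.
  split.
  - intros h; split; [apply card_ge, h|intros g; pose proof (card_le _ _ _ h g); lia].
  - intros [a b]; apply card_fin; auto.
Qed.

Lemma not_cge {X} (P : set X) n : ~ cge n P -> exists m, m < n /\ has_card P (Some m).
Proof.
  induction n; intros h.
  - exfalso; apply h, ge0.
  - destruct (classic (cge n P)) as [g|g].
    + exists n; split; [lia|apply card_fin; auto].
    + destruct (IHn g) as [m [a b]]; exists m; split; [lia|auto].
Qed.

Lemma card_ge_iff {X} (P Q : set X) : (forall n, cge n P <-> cge n Q) -> forall k, has_card P k <-> has_card Q k.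
Proof.
  intros h [m|].
  - rewrite !card_some_iff, !h; tauto.
  - rewrite !card_inf; split; intros g n; apply h, g.
Qed.

Lemma card_unique {X} (P : set X) m : has_card P (Some m) -> forall k, has_card P k <-> k = Some m.
Proof.
  intros h [m'|]; split; intros g.
  - apply card_some_iff in h; apply card_some_iff in g.
    destruct h as [h1 h2], g as [g1 g2].
    assert (~ m < m'). { intros c; apply h2, (ge_le _ _ _ g1); lia. }
    assert (~ m' < m). { intros c; apply g2, (ge_le _ _ _ h1); lia. }
    f_equal; lia.
  - inversion g; subst; auto.
  - pose proof (proj1 (card_inf P) g) as g'. exfalso; pose proof (card_le _ _ _ h (g' (S m))); lia.
  - discriminate.
Qed.

Lemma card_None_unique {X} (P : set X) : has_card P None -> forall k, has_card P k <-> k = None.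
Proof.
  intros h [m|]; split; intros g; auto.
  - pose proof (proj1 (card_inf P) h) as h'; pose proof (card_le _ _ _ g (h' (S m))); lia.
  - discriminate.
Qed.

Lemma card0 {X} (P : set X) : has_card P (Some 0) <-> forall z, ~ P z.
Proof.
  split.
  - intros [l [a [b c]]] z pz. destruct l; [|discriminate]. apply c in pz; exact pz.
  - intros h; exists []; repeat split; auto; [constructor|intros pz; exfalso; eapply h; eauto|intros []].
Qed.

Lemma ge_union_disj {X} (A B : set X) n : (forall z, A z -> B z -> False) ->
  (cge n (fun z => A z \/ B z) <-> exists c, c <= n /\ cge c A /\ cge (n - c) B).
Proof.
  intros hd; split.
  - intros [l [a [b c]]].
    set (f := fun z => if excluded_middle_informative (A z) then true else false).
    pose proof (filter_length f l) as e.
    exists (length (filter f l)); split; [lia|split].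
    + exists (filter f l); repeat split; auto using NoDup_filter.
      intros x hx; apply filter_In in hx; destruct hx as [_ hx]; unfold f in hx.
      destruct (excluded_middle_informative (A x)); auto; discriminate.
    + exists (filter (fun x => negb (f x)) l); repeat split; auto using NoDup_filter; try lia.
      intros x hx; apply filter_In in hx; destruct hx as [hx hx']; unfold f in hx'.
      destruct (excluded_middle_informative (A x)); [discriminate|].
      destruct (c x hx); tauto.
  - intros [k [hk [[l1 [a1 [b1 c1]]] [l2 [a2 [b2 c2]]]]]].
    exists (l1 ++ l2); repeat split.
    + apply NoDup_app; auto. intros z h1 h2; eapply hd; eauto.
    + rewrite length_app; lia.
    + intros x hx; apply in_app_or in hx; destruct hx; auto.
Qed.

Lemma ge_incr {X} (U : nat -> set X) n : (forall a b z, a <= b -> U a z -> U b z) ->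
  (cge n (fun z => exists N, U N z) <-> exists N, cge n (U N)).
Proof.
  intros hm; split.
  - intros [l [a [b c]]].
    assert (exists N, forall x, In x l -> U N x) as [N hN].
    { clear a b. induction l as [|y l IH].
      - exists 0; intros x [].
      - destruct IH as [N hN]. { intros x hx; apply c; right; auto. }
        destruct (c y (or_introl eq_refl)) as [N' hN'].
        exists (N + N'); intros x [e|e]; subst.
        + apply (hm N'); auto; lia.
        + apply (hm N); auto; lia. }
    exists N, l; auto.
  - intros [N g]; apply (ge_mono _ _ _ (fun z h => ex_intro _ N h) g).
Qed.


Fixpoint pdisj {X} (l : list (set X)) : Prop :=
  match l with
  | [] => True
  | C :: l' => (forall D z, In D l' -> C z -> D z -> False) /\ pdisj l'
  end.

Definition DLU {X} (H : set (set X)) (A : set X) (l : list (set X)) :=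
  (forall C, In C l -> H C) /\ pdisj l /\ forall z, A z <-> exists C, In C l /\ C z.

Lemma pdisj_app {X} (l1 l2 : list (set X)) : pdisj l1 -> pdisj l2 ->
  (forall C D z, In C l1 -> In D l2 -> C z -> D z -> False) -> pdisj (l1 ++ l2).
Proof.
  induction l1 as [|C l1 IH]; simpl; auto.
  intros [h1 h2] h3 h4. split.
  - intros D z hD hC hDz. apply in_app_or in hD; destruct hD.
    + eapply h1; eauto.
    + eapply h4; eauto.
  - apply IH; auto. intros; eapply h4; eauto.
Qed.

Lemma pdisj_seq {X} (C : nat -> set X) a n :
  (forall i j x, a <= i < a + n -> a <= j < a + n -> i <> j -> C i x -> C j x -> False) ->
  pdisj (map C (seq a n)).
Proof.
  revert a; induction n; intros a h; simpl; auto. split.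
  - intros D z hD h1 h2. apply in_map_iff in hD. destruct hD as [i [e hi]]; subst.
    apply in_seq in hi. eapply (h a i); eauto; lia.
  - apply IHn; intros; eapply h; eauto; lia.
Qed.

Lemma semiring_DLU {S} (H : set (set S)) A B : semiring H -> H A -> H B ->
  exists l, DLU H (fun z => A z /\ ~ B z) l.
Proof.
  intros [_ [_ hd]] ha hb. destruct (hd A B ha hb) as [n [C [h1 [h2 h3]]]].
  exists (map C (seq 0 n)); split; [|split].
  - intros D hD; apply in_map_iff in hD; destruct hD as [i [e hi]]; subst; apply in_seq in hi; apply h1; lia.
  - apply pdisj_seq. intros i j x hi hj ne; apply h2; lia.
  - intros z; rewrite h3; split.
    + intros [i [hi hz]]; exists (C i); split; auto. apply in_map, in_seq; lia.
    + intros [D [hD hz]]; apply in_map_iff in hD; destruct hD as [i [e hi]]; subst; apply in_seq in hi; exists i; split; auto; lia.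
Qed.

Lemma DLU_diff {S} (H : set (set S)) (l : list (set S)) : semiring H -> forall A B, DLU H A l -> H B ->
  exists l', DLU H (fun z => A z /\ ~ B z) l'.
Proof.
  intros hH. induction l as [|C l IH]; intros A B [h1 [h2 h3]] hB.
  - exists []; split; [intros C []|split; [exact I|]].
    intros z; split; [intros [a _]; apply h3 in a; destruct a as [C [[] _]]|intros [C [[] _]]].
  - destruct h2 as [hd hp].
    destruct (IH (fun z => exists D, In D l /\ D z) B) as [l2 [g1 [g2 g3]]].
    { split; [intros D hD; apply h1; right; auto|split; [auto|tauto]]. }
    { auto. }
    destruct (semiring_DLU H C B hH (h1 C (or_introl eq_refl)) hB) as [l1 [f1 [f2 f3]]].
    exists (l1 ++ l2); split; [|split].
    + intros D hD; apply in_app_or in hD; destruct hD; auto.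
    + apply pdisj_app; auto. intros D E z hD hE hDz hEz.
      assert (C z /\ ~ B z) as [c1 _] by (apply f3; eauto).
      assert ((exists D, In D l /\ D z) /\ ~ B z) as [[D' [e1 e2]] _] by (apply g3; eauto).
      eapply hd; eauto.
    + intros z; split.
      * intros [a nb]. apply h3 in a. destruct a as [D [[e|e] hz]]; subst.
        -- destruct (proj1 (f3 z) (conj hz nb)) as [E [hE hEz]]; exists E; split; auto; apply in_or_app; auto.
        -- destruct (proj1 (g3 z) (conj (ex_intro _ D (conj e hz)) nb)) as [E [hE hEz]]; exists E; split; auto; apply in_or_app; auto.
      * intros [E [hE hEz]]. apply in_app_or in hE; destruct hE as [hE|hE].
        -- destruct (proj2 (f3 z) (ex_intro _ E (conj hE hEz))) as [a b]; split; auto; apply h3; exists C; simpl; eauto.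
        -- destruct (proj2 (g3 z) (ex_intro _ E (conj hE hEz))) as [[D [a c]] b]; split; auto; apply h3; exists D; simpl; eauto.
Qed.

Lemma DLU_inter {S} (H : set (set S)) (l : list (set S)) A B : semiring H -> DLU H A l -> H B ->
  DLU H (fun z => A z /\ B z) (map (fun C z => C z /\ B z) l).
Proof.
  intros [_ [hi _]] [h1 [h2 h3]] hB. split; [|split].
  - intros D hD; apply in_map_iff in hD; destruct hD as [C [e hC]]; subst; auto.
  - clear h1 h3; induction l as [|C l IH]; simpl in *; auto. destruct h2 as [hd hp]; split; [|apply IH; auto].
    intros D z hD c d. destruct c as [c1 _]. apply in_map_iff in hD; destruct hD as [E [e hE]]; subst.
    destruct d as [d1 _]. eapply hd; eauto.
  - intros z; rewrite h3; split.
    + intros [[C [hC hz]] hb]; exists (fun z => C z /\ B z); split; auto. apply in_map_iff; eauto.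
    + intros [D [hD hz]]; apply in_map_iff in hD; destruct hD as [C [e hC]]; subst; destruct hz; eauto.
Qed.

Section Good.
Context {St : Type} (H : set (set St)) (hH : semiring H).

Definition good (X : set St) := forall n, calC H (fun M => cge n (fun z => X z /\ proj1_sig M z)).

Let saH := sigma_gen_sa (fun Y => exists A k, H A /\ Y = (fun M => N_eq A M k)).

Lemma gen_H A k : H A -> calC H (fun M => N_eq A M k).
Proof. intros h; apply sigma_gen_incl; exists A, k; auto. Qed.

Lemma good_ext X Y : good X -> (forall z, X z <-> Y z) -> good Y.
Proof. intros g e; rewrite <- (set_ext _ _ e); exact g. Qed.

Lemma good_H B : H B -> good B.
Proof.
  intros hB n.
  apply (sa_ext _ _ _ (sa_C _ saH _ (sa_U _ saH (fun m M => m < n /\ N_eq B M (Some m))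
           (fun m => sa_cond _ saH _ _ (fun _ => gen_H B (Some m) hB))))).
  intros M; split.
  - intros hn. apply NNPP; intros c. apply hn. destruct (not_cge _ _ c) as [m [a b]]; exists m; auto.
  - intros g [m [a b]]. pose proof (card_le _ _ _ b g); lia.
Qed.

Lemma good_empty : good (fun _ => False).
Proof.
  intros n. apply (sa_ext _ _ _ (sa_cond _ saH (n = 0) _ (fun _ => sa_T _ saH))).
  intros M; split.
  - intros [e _]; subst; apply ge0.
  - intros [l [a [b c]]]; destruct l as [|x l]; [subst; split; auto|exfalso; destruct (c x (or_introl eq_refl)) as [[] _]].
Qed.

Lemma good_union X Y : (forall z, X z -> Y z -> False) -> good X -> good Y -> good (fun z => X z \/ Y z).
Proof.
  intros hd gx gy n.
  apply (sa_ext _ _ _ (sa_U _ saH (fun c M => c <= n /\ (cge c (fun z => X z /\ proj1_sig M z) /\ cge (n - c) (fun z => Y z /\ proj1_sig M z)))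
    (fun c => sa_cond _ saH _ _ (fun _ => sa_and _ saH _ _ (gx c) (gy (n - c)))))).
  intros M.
  rewrite (set_ext (fun z => (X z \/ Y z) /\ proj1_sig M z) (fun z => (X z /\ proj1_sig M z) \/ (Y z /\ proj1_sig M z))) by tauto.
  rewrite ge_union_disj; [tauto|].
  intros z [a _] [b _]; eauto.
Qed.

Lemma good_DLU X l : DLU H X l -> good X.
Proof.
  revert X; induction l as [|C l IH]; intros X [h1 [h2 h3]].
  - apply (good_ext _ _ good_empty). intros z; rewrite h3; split; [tauto|intros [C [[] _]]].
  - destruct h2 as [hd hp].
    apply (good_ext (fun z => C z \/ exists D, In D l /\ D z)).
    + apply good_union.
      * intros z a [D [b c]]; eauto.
      * apply good_H, h1; left; auto.
      * apply IH; split; [intros; apply h1; right; auto|split; [auto|tauto]].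
    + intros z; rewrite h3; split.
      * intros [a|[D [a b]]]; [exists C|exists D]; simpl; auto.
      * intros [D [[e|e] b]]; subst; eauto.
Qed.

Lemma good_incr (U : nat -> set St) : (forall a b z, a <= b -> U a z -> U b z) -> (forall N, good (U N)) ->
  good (fun z => exists N, U N z).
Proof.
  intros hm g n. apply (sa_ext _ _ _ (sa_U _ saH _ (fun N => g N n))).
  intros M.
  rewrite (set_ext (fun z => (exists N, U N z) /\ proj1_sig M z) (fun z => exists N, U N z /\ proj1_sig M z))
    by (intros z; split; [intros [[N a] b]; eauto|intros [N [a b]]; eauto]).
  rewrite ge_incr; [tauto|]. intros a b z hab [u m]; split; auto; eapply hm; eauto.
Qed.

Lemma good_level X k : good X -> calC H (fun M => N_eq X M k).
Proof.
  intros g. destruct k as [m|].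
  - apply (sa_ext _ _ _ (sa_and _ saH _ _ (g m) (sa_C _ saH _ (g (S m))))).
    intros M; unfold N_eq; rewrite card_some_iff; tauto.
  - apply (sa_ext _ _ _ (sa_I _ saH _ g)).
    intros M; unfold N_eq; rewrite card_inf; tauto.
Qed.

Lemma good_cu A : countable_union_of H A -> good A.
Proof.
  intros [B [hB hA]].
  set (U := fix U N := match N with 0 => B 0 | S N => fun z => U N z \/ B (S N) z end).
  assert (hm : forall a b z, a <= b -> U a z -> U b z).
  { intros a b z hab; induction hab; auto. intros h; simpl; left; auto. }
  assert (hd : forall N C, H C -> exists l, DLU H (fun z => C z /\ ~ U N z) l).
  { induction N; intros C hC.
    - apply semiring_DLU; [exact hH|exact hC|exact (hB 0)].
    - destruct (IHN C hC) as [l hl].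
      destruct (DLU_diff H l hH _ _ hl (hB (S N))) as [l' hl'].
      exists l'. rewrite (set_ext (fun z => C z /\ ~ U (S N) z) (fun z => (C z /\ ~ U N z) /\ ~ B (S N) z)); auto.
      intros z; simpl; tauto. }
  assert (gU : forall N, good (U N)).
  { induction N.
    - apply good_H, hB.
    - destruct (hd N (B (S N)) (hB (S N))) as [l hl].
      apply (good_ext (fun z => U N z \/ (B (S N) z /\ ~ U N z))).
      + apply good_union; auto. * intros z a [_ b]; auto. * eapply good_DLU; eauto.
      + intros z; simpl; tauto. }
  apply (good_ext _ _ (good_incr U hm gU)).
  intros z; rewrite hA; split.
  - intros [N u]. clear hm hd gU. induction N; simpl in u; [eauto|destruct u; eauto].
  - intros [N b]. exists N. destruct N; simpl; auto.
Qed.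
End Good.


Section Fwd.
Context {St : Type} (H : set (set St)) (hH : semiring H).

Definition sim (h : nat -> set St) (M M' : CS St) :=
  forall j k, N_eq (h j) M k <-> N_eq (h j) M' k.

Definition inv (Y : set (CS St)) := exists h : nat -> set St, (forall j, H (h j)) /\
  forall M M', sim h M M' -> (Y M <-> Y M').

Lemma inv_sa : is_sigma_algebra inv.
Proof.
  destruct hH as [h0 _].
  split; [|split].
  - exists (fun _ => fun _ => False); split; auto; tauto.
  - intros Y [h [hh hi]]; exists h; split; auto; intros M M' s; specialize (hi M M' s); tauto.
  - intros Y hY.
    pose (hh := fun n => proj1_sig (constructive_indefinite_description _ (hY n))).
    assert (hp : forall n, (forall j, H (hh n j)) /\ forall M M', sim (hh n) M M' -> (Y n M <-> Y n M')).
    { intros n; exact (proj2_sig (constructive_indefinite_description _ (hY n))). }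
    exists (fun j => hh (fst (of_nat j)) (snd (of_nat j))). split.
    + intros j; apply hp.
    + intros M M' s. assert (e : forall n, Y n M <-> Y n M').
      { intros n; apply hp. intros j k. specialize (s (to_nat (n, j)) k). cbv beta in s. rewrite cancel_of_to in s. exact s. }
      split; intros [n g]; exists n; apply e; auto.
Qed.

Lemma inv_calC Y : calC H Y -> inv Y.
Proof.
  intros hY; apply hY; [apply inv_sa|]. intros Z [A [k [hA e]]]; subst.
  exists (fun _ => A); split; auto. intros M M' s; apply (s 0 k).
Qed.

Lemma countable_sub (P Q : set St) : countable P -> (forall z, Q z -> P z) -> countable Q.
Proof. intros [f hf] hq; exists f; intros; apply hf; auto. Qed.

Lemma countable_range x (y : nat -> St) : countable (fun z => z = x \/ exists n, y n = z).
Proof.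
  exists (fun z => match excluded_middle_informative (exists n, y n = z) with
          | left e => S (proj1_sig (constructive_indefinite_description _ e))
          | right _ => 0 end).
  intros z w hz hw.
  destruct (excluded_middle_informative (exists n, y n = z)) as [ez|ez];
  destruct (excluded_middle_informative (exists n, y n = w)) as [ew|ew]; intros e.
  - injection e as e.
    pose proof (proj2_sig (constructive_indefinite_description _ ez)) as a.
    pose proof (proj2_sig (constructive_indefinite_description _ ew)) as b.
    simpl in a, b. rewrite <- a, <- b, e; reflexivity.
  - discriminate.
  - discriminate.
  - destruct hz as [hz|hz]; [|contradiction]. destruct hw as [hw|hw]; [|contradiction]. congruence.
Qed.

Lemma countable_single (x : St) : countable (fun z => z = x).
Proof. exists (fun _ => 0); intros; congruence. Qed.

Lemma bits (P : nat -> Prop) n : exists p, forall j, j < n -> (Nat.testbit p j = true <-> P j).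
Proof.
  revert P; induction n; intros P.
  - exists 0; intros; lia.
  - destruct (IHn (fun j => P (S j))) as [p hp].
    destruct (classic (P 0)) as [p0|p0].
    + exists (2 * p + 1); intros [|j] hj.
      * rewrite Nat.testbit_odd_0; tauto.
      * rewrite Nat.testbit_odd_succ'; apply hp; lia.
    + exists (2 * p); intros [|j] hj.
      * rewrite Nat.testbit_even_0; split; [discriminate|tauto].
      * rewrite Nat.testbit_even_succ'; apply hp; lia.
Qed.

Definition atom (h : nat -> set St) k n p : set St :=
  fun z => h k z /\ forall j, j < n -> (h j z <-> Nat.testbit p j = true).

Lemma atom_DLU h : (forall j, H (h j)) -> forall k n p, exists l, DLU H (atom h k n p) l.
Proof.
  intros hh k n p. induction n.
  - exists [h k]; split; [|split].
    + intros C [e|[]]; subst; auto.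
    + simpl; split; auto; intros D z [].
    + intros z; unfold atom; split.
      * intros [a _]; exists (h k); simpl; auto.
      * intros [C [[e|[]] hz]]; subst; split; auto; intros; lia.
  - destruct IHn as [l hl]. destruct (Nat.testbit p n) eqn:E.
    + eexists. pose proof (DLU_inter H l _ _ hH hl (hh n)) as g.
      rewrite (set_ext (atom h k (S n) p) (fun z => atom h k n p z /\ h n z)); [exact g|].
      intros z; unfold atom; split.
      * intros [a b]; split; [split; auto; intros j hj; apply b; lia|apply b; auto; lia].
      * intros [[a b] c]; split; auto; intros j hj. destruct (Nat.eq_dec j n); [subst; rewrite E; tauto|apply b; lia].
    + destruct (DLU_diff H l hH _ _ hl (hh n)) as [l' g]. exists l'.
      rewrite (set_ext (atom h k (S n) p) (fun z => atom h k n p z /\ ~ h n z)); [exact g|].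
      intros z; unfold atom; split.
      * intros [a b]; split; [split; auto; intros j hj; apply b; lia|rewrite (b n); [rewrite E; discriminate|lia]].
      * intros [[a b] c]; split; auto; intros j hj. destruct (Nat.eq_dec j n); [subst; rewrite E; split; [tauto|discriminate]|apply b; lia].
Qed.

Lemma inf_crit (P : set St) : (forall l, exists z, P z /\ ~ In z l) -> has_card P None.
Proof. intros h [l hl]. destruct (h l) as [z [a b]]. apply b, hl, a. Qed.

Lemma card_single (P : set St) x : P x -> (forall w, P w -> w = x) -> has_card P (Some 1).
Proof.
  intros px h. exists [x]; split; [constructor; [intros []|constructor]|split; [reflexivity|]].
  intros w; split; [intros pw; left; symmetry; auto|intros [e|[]]; subst; auto].
Qed.

End Fwd.


Section Main.
Context {St : Type} (H : set (set St)) (hH : semiring H).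

Lemma sim_ext h (M M' : CS St) : (forall j z, h j z /\ proj1_sig M z <-> h j z /\ proj1_sig M' z) -> sim h M M'.
Proof.
  intros e j k; unfold N_eq. rewrite (set_ext _ _ (e j)); tauto.
Qed.

Lemma list_avoid (y : nat -> St) : (forall z, exists N, forall n, N <= n -> y n <> z) ->
  forall l, exists N, forall n, N <= n -> ~ In (y n) l.
Proof.
  intros hz l; induction l as [|a l IH].
  - exists 0; intros n _ [].
  - destruct IH as [N hN]; destruct (hz a) as [N' hN'].
    exists (N + N'); intros n hn [e|e].
    + apply (hN' n); [lia|auto].
    + apply (hN n); [lia|auto].
Qed.

Lemma key A (h : nat -> set St) : (forall M M', sim h M M' -> (N_eq A M (Some 0) <-> N_eq A M' (Some 0))) ->
  forall x, A x -> exists k n, h k x /\ forall y, (forall j, j < n -> (h j y <-> h j x)) -> A y.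
Proof.
  intros hinv x ax.
  set (sing := fun w : St => exist countable (fun z => z = w) (countable_single w)).
  assert (Y0s : forall w, N_eq A (sing w) (Some 0) <-> ~ A w).
  { intros w; unfold N_eq, sing; cbn [proj1_sig]; rewrite card0. split; [intros c a; apply (c w); auto|intros c z [a e]; subst; auto]. }
  assert (hk : exists k, h k x).
  { apply NNPP; intros nk.
    set (emp := exist countable (fun _ : St => False) (countable_sub _ _ (countable_single x) (fun _ f => False_ind _ f))).
    assert (s : sim h (sing x) emp).
    { apply sim_ext; intros j z; unfold sing, emp; cbn [proj1_sig]; split; [intros [a e]; subst; exfalso; apply nk; eauto|tauto]. }
    apply hinv in s. apply (proj1 (Y0s x)); [|exact ax].
    apply s. unfold N_eq, emp; cbn [proj1_sig]; apply card0; tauto. }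
  destruct hk as [k hk]. exists k.
  apply NNPP; intros hn.
  assert (hy : forall n, exists y, (forall j, j < n -> (h j y <-> h j x)) /\ ~ A y).
  { intros n. apply NNPP; intros c. apply hn; exists n; split; auto.
    intros y g; apply NNPP; intros ny; apply c; eauto. }
  pose (y := fun n => proj1_sig (constructive_indefinite_description _ (hy n))).
  assert (hyp : forall n, (forall j, j < n -> (h j (y n) <-> h j x)) /\ ~ A (y n)).
  { intros n; exact (proj2_sig (constructive_indefinite_description _ (hy n))). }
  destruct (classic (exists z, forall N, exists n, N <= n /\ y n = z)) as [[z hz]|nz].
  - assert (ag : forall j, h j z <-> h j x).
    { intros j; destruct (hz (S j)) as [n [a e]]; subst; apply hyp; lia. }
    assert (nA : ~ A z). { destruct (hz 0) as [n [_ e]]; subst; apply hyp. }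
    assert (s : sim h (sing x) (sing z)).
    { intros j kk; unfold N_eq, sing; cbn [proj1_sig]. destruct (classic (h j x)) as [c|c].
      - rewrite (card_unique _ _ (card_single (fun w => h j w /\ w = x) x (conj c eq_refl) (fun w pw => proj2 pw))).
        assert (c' : h j z) by (apply ag; auto).
        rewrite (card_unique _ _ (card_single (fun w => h j w /\ w = z) z (conj c' eq_refl) (fun w pw => proj2 pw))).
        tauto.
      - assert (e0 : forall w, has_card (fun v => h j v /\ v = w) (Some 0) <-> ~ h j w).
        { intros w; rewrite card0; split; [intros g hw; apply (g w); auto|intros g v [a e]; subst; auto]. }
        assert (c' : ~ h j z) by (rewrite ag; auto).
        rewrite (card_unique _ _ (proj2 (e0 x) c)), (card_unique _ _ (proj2 (e0 z) c')). tauto. }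
    apply hinv in s. apply (proj1 (Y0s x)); [|exact ax]. apply s, Y0s, nA.
  - assert (hz : forall z, exists N, forall n, N <= n -> y n <> z).
    { intros z. apply NNPP; intros c. apply nz; exists z. intros N. apply NNPP; intros c2.
      apply c; exists N; intros n hn2 e; apply c2; eauto. }
    pose proof (list_avoid y hz) as hl.
    set (M := exist countable (fun z => z = x \/ exists n, y n = z) (countable_range x y)).
    set (M' := exist countable (fun z => exists n, y n = z)
                 (countable_sub _ _ (countable_range x y) (fun z g => or_intror g))).
    assert (s : sim h M M').
    { intros j kk. destruct (classic (h j x)) as [c|c].
      - unfold N_eq, M, M'; cbn [proj1_sig].
        assert (i1 : has_card (fun z => h j z /\ (z = x \/ exists n, y n = z)) None).
        { apply inf_crit. intros l. destruct (hl l) as [N hN]. exists (y (N + S j)).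
          split; [split; [apply (proj1 (hyp _)); [lia|auto]|right; eauto]|apply hN; lia]. }
        assert (i2 : has_card (fun z => h j z /\ (exists n, y n = z)) None).
        { apply inf_crit. intros l. destruct (hl l) as [N hN]. exists (y (N + S j)).
          split; [split; [apply (proj1 (hyp _)); [lia|auto]|eauto]|apply hN; lia]. }
        rewrite (card_None_unique _ i1), (card_None_unique _ i2); tauto.
      - unfold N_eq, M, M'; cbn [proj1_sig].
        rewrite (set_ext (fun z => h j z /\ (z = x \/ exists n, y n = z)) (fun z => h j z /\ (exists n, y n = z))); [tauto|].
        intros z; split; [intros [a [e|b]]; [subst; contradiction|auto]|intros [a b]; auto]. }
    apply hinv in s. unfold N_eq, M, M' in s; cbn [proj1_sig] in s.
    rewrite !card0 in s.
    assert (g : forall z, ~ (A z /\ exists n, y n = z)).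
    { intros z [a [n e]]; subst; apply (hyp n); auto. }
    apply (proj2 s g x); auto.
Qed.

Lemma fwd A : calC H (fun M => N_eq A M (Some 0)) -> countable_union_of H A.
Proof.
  intros hY. destruct (inv_calC H hH _ hY) as [h [hh hinv]].
  pose (L := fun q : nat * nat * nat =>
     proj1_sig (constructive_indefinite_description _ (atom_DLU H hH h hh (fst (fst q)) (snd (fst q)) (snd q)))).
  assert (hL : forall k n p, DLU H (atom h k n p) (L (k, n, p))).
  { intros k n p. exact (proj2_sig (constructive_indefinite_description _ (atom_DLU H hH h hh k n p))). }
  pose (C := fun k n p i => nth i (L (k, n, p)) (fun _ : St => False)).
  pose (D := fun k n p i => if excluded_middle_informative (forall z, C k n p i z -> A z) then C k n p i else (fun _ : St => False)).
  assert (HC : forall k n p i, H (C k n p i)).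
  { intros k n p i. unfold C. destruct (nth_in_or_default i (L (k, n, p)) (fun _ => False)) as [ii|e].
    + apply (proj1 (hL k n p)); exact ii.
    + rewrite e; apply hH. }
  exists (fun idx => D (fst (of_nat (fst (of_nat (fst (of_nat idx))))))
                       (snd (of_nat (fst (of_nat (fst (of_nat idx))))))
                       (snd (of_nat (fst (of_nat idx)))) (snd (of_nat idx))).
  split.
  - intros idx. unfold D. destruct excluded_middle_informative; [|apply hH].
    apply HC.
  - intros x; split.
    + intros ax. destruct (key A h hinv x ax) as [k [n [hk hA]]].
      destruct (bits (fun j => h j x) n) as [p hp].
      assert (xa : atom h k n p x). { split; auto. intros j hj; rewrite hp; tauto. }
      destruct (proj1 (proj2 (proj2 (hL k n p)) x) xa) as [E [hE hEx]].
      destruct (In_nth _ _ (fun _ : St => False) hE) as [i [_ ei]].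
      exists (to_nat (to_nat (to_nat (k, n), p), i)). repeat (rewrite cancel_of_to; cbn [fst snd]).
      assert (CE : C k n p i = E) by exact ei.
      assert (sub : forall z, C k n p i z -> A z).
      { intros z cz. rewrite CE in cz. apply hA.
        assert (az : atom h k n p z) by (apply (proj2 (proj2 (hL k n p))); eauto).
        intros j hj. rewrite (proj2 az j hj), hp; tauto. }
      unfold D. destruct excluded_middle_informative as [_|c]; [|exfalso; apply c; exact sub].
      rewrite CE; exact hEx.
    + intros [idx hx]. unfold D in hx. destruct excluded_middle_informative as [s|_]; [apply s; exact hx|destruct hx].
Qed.
End Main.

Theorem theorem3p5 (S : Type) (T H : set (set S))
  (hTne : exists A, T A)
  (hsep : exists E : nat -> set S, (forall n, T (E n)) /\ separates E)
  (hH : semiring H) :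
  (forall Y, calC T Y -> calC H Y) <-> (forall A, T A -> countable_union_of H A).
Proof.
  split.
  - intros hC A hA. apply (fwd H hH). apply hC. apply sigma_gen_incl. exists A, (Some 0); auto.
  - intros hU Y hY. apply hY; [apply sigma_gen_sa|]. intros Z [A [k [hA e]]]; subst.
    apply good_level. apply good_cu; auto.
Qed.
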